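(* Let $\mu>0$ and $0<\beta<1$. Let $g:\mathbb{C}\to\mathbb{R}$ be given by $g(x)=\frac{\mu+|x|^2}{2}$ for $|x|\ge\sqrt{\mu}$ and $g(x)=\sqrt{\mu}|x|$ for $|x|\le\sqrt{\mu}$. Suppose $z_0\in\partial g(x_0)$ and $|z_0|<\beta^2\sqrt{\mu}$. Then for all $x_1\in\mathbb{C}$ with $x_1\neq x_0$ and all $z_1\in\partial g(x_1)$, $$\mathrm{Re}\big((z_1-z_0)\overline{(x_1-x_0)}\big)>(1-\beta^2)|x_1-x_0|^2.$$
   Context: $\partial g$ is the convex subdifferential (with $\mathbb{C}$ regarded as $\mathbb{R}^2$ with inner product $\mathrm{Re}(z\bar w)$); explicitly $\partial g(x)=\{x\}$ if $|x|\ge\sqrt\mu$, $\partial g(x)=\{\sqrt{\mu}\,x/|x|\}$ if $0<|x|\le\sqrt\mu$, and $\partial g(0)=\sqrt{\mu}\,\mathbb{D}$, where $\mathbb{D}$ is the closed unit disc. (In the paper $\beta$ is the constant $\beta_N=\inf\{\|Ax\|_2/\|x\|_2:x\ne0,\mathrm{card}(x)\le N\}$ of a matrix $A$, assumed to satisfy $0<\beta_N<1$; only its value matters here.) *)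

(* Defs.v *)
From Stdlib Require Import Reals.
From Coquelicot Require Import Coquelicot.
Open Scope R_scope.

Definition gfun (mu : R) (x : C) : R :=
  if Rle_dec (sqrt mu) (Cmod x) then (mu + Cmod x ^ 2) / 2
  else sqrt mu * Cmod x.

(* Convex subdifferential on C viewed as R^2 with inner product Re(z * conj w). *)
Definition subdiff (g : C -> R) (x z : C) : Prop :=
  forall y : C, g x + Re (Cmult z (Cconj (Cminus y x))) <= g y.

(* Main.v *)
Require Import Defs.
From Stdlib Require Import Reals Lra Psatz.
From Coquelicot Require Import Coquelicot.
Open Scope R_scope.

Lemma ip_le (z w : C) : Re (Cmult z (Cconj w)) <= Cmod z * Cmod w.
Proof.
  pose proof (re_le_Cmod (Cmult z (Cconj w))) as H.
  rewrite Cmod_mult, Cmod_conj in H.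
  pose proof (Rle_abs (Re (Cmult z (Cconj w)))). lra.
Qed.

Lemma sq_mu mu : 0 < mu -> sqrt mu * sqrt mu = mu.
Proof. intros; apply sqrt_sqrt; lra. Qed.

Lemma g_ge mu w : 0 < mu -> sqrt mu * Cmod w <= gfun mu w.
Proof.
  intros Hmu. pose proof (sq_mu mu Hmu). unfold gfun.
  destruct (Rle_dec (sqrt mu) (Cmod w)); [|lra].
  nra.
Qed.

Lemma g_le mu w : 0 < mu -> gfun mu w <= (mu + Cmod w ^ 2) / 2.
Proof.
  intros Hmu. pose proof (sq_mu mu Hmu). unfold gfun.
  destruct (Rle_dec (sqrt mu) (Cmod w)); [lra|].
  nra.
Qed.

Lemma g0 mu : 0 < mu -> gfun mu 0 = 0.
Proof.
  intros Hmu. unfold gfun. rewrite Cmod_0.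
  pose proof (sqrt_lt_R0 mu Hmu).
  destruct (Rle_dec (sqrt mu) 0); lra.
Qed.

Lemma Cmod_scal (a : R) (x : C) : Cmod (Cmult (RtoC a) x) ^ 2 = a ^ 2 * Cmod x ^ 2.
Proof. rewrite !Cmod2_alt. destruct x; simpl. ring. Qed.

Lemma re_lin (z x : C) (h : R) :
  Re (Cmult z (Cconj (Cminus (Cmult (RtoC (1 - h)) x) x))) = - h * Re (Cmult z (Cconj x)).
Proof. destruct z, x; simpl. ring. Qed.

Lemma re_zero (z x : C) : Re (Cmult z (Cconj (Cminus 0 x))) = - Re (Cmult z (Cconj x)).
Proof. destruct z, x; simpl. ring. Qed.

Theorem lemma4p4 (mu beta : R) (Hmu : 0 < mu) (Hb0 : 0 < beta) (Hb1 : beta < 1)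
  (x0 z0 : C) (Hz0 : subdiff (gfun mu) x0 z0) (Hsmall : Cmod z0 < beta ^ 2 * sqrt mu) :
  forall (x1 z1 : C), x1 <> x0 -> subdiff (gfun mu) x1 z1 ->
    Re (Cmult (Cminus z1 z0) (Cconj (Cminus x1 x0))) > (1 - beta ^ 2) * Cmod (Cminus x1 x0) ^ 2.
Proof.
  intros x1 z1 Hne Hz1.
  pose proof (sqrt_lt_R0 mu Hmu) as Hs.
  pose proof (sq_mu mu Hmu) as Hss.
  assert (Hb2 : beta ^ 2 < 1) by nra.
  assert (Hb2' : 0 < beta ^ 2) by nra.
  assert (Hx0 : x0 = 0%C).
  { destruct (Ceq_dec x0 0) as [E|E]; [exact E|exfalso].
    apply Cmod_gt_0 in E.
    specialize (Hz0 0%C). rewrite g0 in Hz0 by lra. rewrite re_zero in Hz0.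
    pose proof (ip_le z0 x0). pose proof (g_ge mu x0 Hmu).
    assert (0 < (beta ^ 2 * sqrt mu - Cmod z0) * Cmod x0) by (apply Rmult_lt_0_compat; lra).
    assert (0 < (1 - beta ^ 2) * sqrt mu * Cmod x0) by (apply Rmult_lt_0_compat; [apply Rmult_lt_0_compat|]; lra).
    nra. }
  subst x0.
  assert (Ex : Cminus x1 0 = x1) by (destruct x1; unfold Cminus, Cplus, Copp; simpl; f_equal; ring).
  rewrite Ex.
  assert (Hr : 0 < Cmod x1) by (apply Cmod_gt_0; exact Hne).
  set (r := Cmod x1) in *.
  assert (Esplit : Re (Cmult (Cminus z1 z0) (Cconj x1)) = Re (Cmult z1 (Cconj x1)) - Re (Cmult z0 (Cconj x1)))
    by (destruct z1, z0, x1; simpl; ring).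
  rewrite Esplit.
  pose proof (ip_le z0 x1) as HQ. fold r in HQ.
  set (P := Re (Cmult z1 (Cconj x1))) in *.
  set (Q := Re (Cmult z0 (Cconj x1))) in *.
  assert (HQ' : Q < beta ^ 2 * sqrt mu * r).
  { pose proof (Cmod_ge_0 z0). nra. }
  assert (HP0 : gfun mu x1 <= P).
  { specialize (Hz1 0%C). rewrite g0 in Hz1 by lra. rewrite re_zero in Hz1. fold P in Hz1. lra. }
  destruct (Rle_dec (sqrt mu) r) as [Hsr|Hsr].
  - assert (Hg : gfun mu x1 = (mu + r ^ 2) / 2).
    { unfold gfun. fold r. destruct (Rle_dec (sqrt mu) r); [reflexivity|lra]. }
    assert (Hh : forall h, 0 < h <= 1 -> r ^ 2 * (1 - h / 2) <= P).
    { intros h Hh. specialize (Hz1 (Cmult (RtoC (1 - h)) x1)).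
      rewrite re_lin in Hz1. fold P in Hz1.
      pose proof (g_le mu (Cmult (RtoC (1 - h)) x1) Hmu) as Hl.
      rewrite Cmod_scal in Hl. fold r in Hl. rewrite Hg in Hz1.
      assert (h * P >= h * (r ^ 2 * (1 - h / 2))) by nra. nra. }
    set (T := (1 - beta ^ 2) * r ^ 2 + Q).
    assert (HT : T < r ^ 2) by (unfold T; nra).
    set (e := r ^ 2 - T).
    assert (He : 0 < e) by (unfold e; lra).
    assert (Hr2 : 0 < r ^ 2) by nra.
    assert (Eq : r ^ 2 * (e / r ^ 2) = e) by (field; lra).
    assert (Hd : 0 < e / r ^ 2) by (apply Rdiv_lt_0_compat; lra).
    assert (HTQ : P - Q > (1 - beta ^ 2) * r ^ 2 <-> P > T) by (unfold T; split; intro; lra).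
    apply HTQ.
    destruct (Rle_dec 1 (e / r ^ 2)) as [H1|H1].
    + specialize (Hh 1 ltac:(lra)).
      assert (r ^ 2 * 1 <= r ^ 2 * (e / r ^ 2)) by (apply Rmult_le_compat_l; lra).
      unfold e in *. lra.
    + specialize (Hh (e / r ^ 2) ltac:(lra)).
      assert (E2 : r ^ 2 * (1 - e / r ^ 2 / 2) = r ^ 2 - e / 2) by (field; lra).
      unfold e in *. lra.
  - assert (Hg : gfun mu x1 = sqrt mu * r).
    { unfold gfun. fold r. destruct (Rle_dec (sqrt mu) r); [lra|reflexivity]. }
    assert (0 <= (1 - beta ^ 2) * r * (sqrt mu - r)) by
      (apply Rmult_le_pos; [apply Rmult_le_pos|]; lra).
    nra.
Qed.
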